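(* Let $G=(X,\Sigma,\longrightarrow,X_0)$ and $R=(Z,\Sigma,\longrightarrow,Z_0)$ be automata and take $\Sigma_r=\Sigma$. There exists a $\Sigma_{uc}$-admissible supervisor $S$ with $S\|G\simeq R$ if and only if there exists a $\Sigma_{ucr}$-controllability set $E$ from $G$ to $R$ (with $\Sigma_r=\Sigma$) such that $\gamma_R(\bigcup E_0)=Z_0$, i.e. $\forall z\in Z_0\,\exists W\in E_0\,\exists x_0\in X_0\,((x_0,z)\in W)$, where $E_0=\{W\in E:\forall x\in X_0\,\exists z\in Z_0\,((x,z)\in W)\text{ and }W\subseteq X_0\times Z_0\}$ and $\gamma_R(V)=\{z\in Z:(x,z)\in V\text{ for some }x\in X\}$.
   Context: An automaton is a 4-tuple $A=(Q,\Sigma,\longrightarrow,Q_0)$ with state set $Q$, finite event set $\Sigma$, ${\longrightarrow}\subseteq Q\times\Sigma\times Q$ and $\emptyset\neq Q_0\subseteq Q$. Write $q\xrightarrow{\sigma}q'$ for $(q,\sigma,q')\in{\longrightarrow}$, $q\xrightarrow{\sigma}$ if some such $q'$ exists; extend to strings. A state is reachable if reached from an initial state by some string. Events are partitioned into uncontrollable $\Sigma_{uc}$ and controllable $\Sigma_c$; $\Sigma_r\subseteq\Sigma$ denotes the set of required events. For a supervisor $S=(Y,\Sigma,\longrightarrow,Y_0)$, $S\|G=(Y\times X,\Sigma,\longrightarrow,Y_0\times X_0)$ with $(y,x)\xrightarrow{\sigma}(y',x')$ iff $y\xrightarrow{\sigma}y'$ and $x\xrightarrow{\sigma}x'$; $S$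 is $\Sigma_{uc}$-admissible w.r.t. $G$ if for every reachable $(y,x)$ of $S\|G$ and $\sigma\in\Sigma_{uc}$, $x\xrightarrow{\sigma}$ implies $(y,x)\xrightarrow{\sigma}$. For automata $A_1,A_2$ (state sets $Q_1,Q_2$, initial sets $Q_{01},Q_{02}$), $\Phi\subseteq Q_1\times Q_2$ is a simulation if every $q_0\in Q_{01}$ has $p_0\in Q_{02}$ with $(q_0,p_0)\in\Phi$ and for all $(q,p)\in\Phi$, $\sigma\in\Sigma$, $q\xrightarrow{\sigma}q'$ there is $p'$ with $p\xrightarrow{\sigma}p'$, $(q',p')\in\Phi$. $\Phi$ is a bisimulation if both $\Phi$ and $\Phi^{-1}=\{(p,q):(q,p)\in\Phi\}$ are simulations; $A_1\simeq A_2$ means a bisimulation exists. For $W,W'\subseteq X\times Z$: $\mathit{match}_{G,R}(W,\sigma,W')$ iff for all $(x,z)\in W$ and $x\xrightarrow{\sigma}x'$ there is $z'$ with $z\xrightarrow{\sigma}z'$ and $(x',z')\in W'$. $E\subseteq\wp(X\times Z)$ is a $\Sigma_{ucr}$-controllability set from $G$ to $R$ if: (istate) some $W_0\in E$ satisfies $\forall x_0\in X_0\,\exists z_0\in Z_0\,((x_0,z_0)\in W_0)$; (a) for every $W\in E$, $\sigma\in\Sigma_{uc}$ there is $W'\in E$ with $\mathit{match}_{G,R}(W,\sigma,W')$; (b) for every $W\in E$, $(x,z)\in W$, $\sigma\in\Sigma_r$, $z\xrightarrow{\sigma}z'$, there exist $x'$, $W'\in E$ with $x\xrightarrow{\sigma}x'$,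 $(x',z')\in W'$, $\mathit{match}_{G,R}(W,\sigma,W')$. *)

(* Defs.v *)
From mathcomp Require Import all_boot.
Set Implicit Arguments. Unset Strict Implicit. Unset Printing Implicit Defensive.

Record automaton (Q : Type) (Sigma : finType) := Automaton {
  trans : Q -> Sigma -> Q -> Prop;
  init : Q -> Prop;
  init_nonempty : exists q, init q
}.

Section Auto.
Variable Sigma : finType.

Definition enabled (Q : Type) (A : automaton Q Sigma) (q : Q) (s : Sigma) : Prop :=
  exists q', trans A q s q'.

Inductive reachable (Q : Type) (A : automaton Q Sigma) : Q -> Prop :=
| reach_init q : init A q -> reachable A q
| reach_step q s q' : reachable A q -> trans A q s q' -> reachable A q'.

Definition sync_trans (Y X : Type) (S : automaton Y Sigma) (G : automaton X Sigma)
  (p : Y * X) (s : Sigma) (p' : Y * X) : Prop :=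
  trans S p.1 s p'.1 /\ trans G p.2 s p'.2.

Definition sync_init (Y X : Type) (S : automaton Y Sigma) (G : automaton X Sigma)
  (p : Y * X) : Prop := init S p.1 /\ init G p.2.

Lemma sync_init_nonempty (Y X : Type) (S : automaton Y Sigma) (G : automaton X Sigma) :
  exists p, sync_init S G p.
Proof.
case: (init_nonempty S) => y Hy; case: (init_nonempty G) => x Hx.
by exists (y, x); split.
Qed.

Definition sync (Y X : Type) (S : automaton Y Sigma) (G : automaton X Sigma) :
  automaton (Y * X) Sigma :=
  Automaton (sync_trans S G) (sync_init_nonempty S G).

Definition admissible (Suc : pred Sigma) (Y X : Type)
  (S : automaton Y Sigma) (G : automaton X Sigma) : Prop :=
  forall (p : Y * X) (s : Sigma), reachable (sync S G) p -> Suc s ->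
    enabled G p.2 s -> enabled (sync S G) p s.

Definition simulation (Q1 Q2 : Type) (A1 : automaton Q1 Sigma)
  (A2 : automaton Q2 Sigma) (Phi : Q1 -> Q2 -> Prop) : Prop :=
  (forall q0, init A1 q0 -> exists p0, init A2 p0 /\ Phi q0 p0) /\
  (forall q p s q', Phi q p -> trans A1 q s q' ->
     exists p', trans A2 p s p' /\ Phi q' p').

Definition bisimulation (Q1 Q2 : Type) (A1 : automaton Q1 Sigma)
  (A2 : automaton Q2 Sigma) (Phi : Q1 -> Q2 -> Prop) : Prop :=
  simulation A1 A2 Phi /\ simulation A2 A1 (fun p q => Phi q p).

Definition bisimilar (Q1 Q2 : Type) (A1 : automaton Q1 Sigma)
  (A2 : automaton Q2 Sigma) : Prop :=
  exists Phi, bisimulation A1 A2 Phi.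

Definition matchGR (X Z : Type) (G : automaton X Sigma) (R : automaton Z Sigma)
  (W : X * Z -> Prop) (s : Sigma) (W' : X * Z -> Prop) : Prop :=
  forall x z x', W (x, z) -> trans G x s x' ->
    exists z', trans R z s z' /\ W' (x', z').

Definition ctrl_set (Suc Sr : pred Sigma) (X Z : Type)
  (G : automaton X Sigma) (R : automaton Z Sigma)
  (E : (X * Z -> Prop) -> Prop) : Prop :=
  (exists W0, E W0 /\ forall x0, init G x0 -> exists z0, init R z0 /\ W0 (x0, z0)) /\
  (forall W s, E W -> Suc s -> exists W', E W' /\ matchGR G R W s W') /\
  (forall W x z s z', E W -> W (x, z) -> Sr s -> trans R z s z' ->
     exists x' W', trans G x s x' /\ E W' /\ W' (x', z') /\ matchGR G R W s W').

Definition E0 (X Z : Type) (G : automaton X Sigma) (R : automaton Z Sigma)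
  (E : (X * Z -> Prop) -> Prop) (W : X * Z -> Prop) : Prop :=
  E W /\ (forall x, init G x -> exists z, init R z /\ W (x, z)) /\
  (forall x z, W (x, z) -> init G x /\ init R z).

Definition bigcup_fam (X Z : Type) (F : (X * Z -> Prop) -> Prop) (p : X * Z) : Prop :=
  exists W, F W /\ W p.

Definition gammaR (X Z : Type) (V : X * Z -> Prop) (z : Z) : Prop :=
  exists x, V (x, z).

End Auto.

(* Main.v *)
Require Import Defs.
From mathcomp Require Import all_boot.
From Stdlib Require Import Classical.

Theorem corollary3 (Sigma : finType) (Suc : pred Sigma) (X Z : Type)
  (G : automaton X Sigma) (R : automaton Z Sigma) :
  (exists (Y : Type) (S : automaton Y Sigma),
     admissible Suc S G /\ bisimilar (sync S G) R)
  <->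
  (exists E : (X * Z -> Prop) -> Prop,
     ctrl_set Suc (fun _ => true) G R E /\
     (forall z, gammaR (bigcup_fam (E0 G R E)) z <-> init R z)).
Proof.
split.
- move=> [Y [S [Hadm [Phi [[Fi Fs] [Bi Bs]]]]]].
  pose V (y : Y) := fun p : X * Z => reachable (sync S G) (y, p.1) /\ Phi (y, p.1) p.2.
  pose E := fun W : X * Z -> Prop => exists y, forall x z, W (x, z) -> V y (x, z).
  pose I (y : Y) := fun p : X * Z => init S y /\ init G p.1 /\ init R p.2 /\ Phi (y, p.1) p.2.
  have HV : forall y y' s, E (V y') -> trans S y s y' ->
      forall W, (forall x z, W (x, z) -> V y (x, z)) -> matchGR G R W s (V y').
    move=> y y' s _ Hyy' W HW x z x' Wxz Hxx'.
    case: (HW _ _ Wxz) => /= Hr Hp.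
    have Hst : trans (sync S G) (y, x) s (y', x') by split.
    case: (Fs _ _ _ _ Hp Hst) => z' [Hz' Hp'].
    exists z'; split => //; split => //=.
    exact: reach_step Hr Hst.
  have EV : forall y, E (V y) by move=> y; exists y.
  have EI : forall y, init S y -> E (I y).
    move=> y Hy; exists y => x z [_ [Hx [Hz Hp]]]; split => //=.
    by apply: reach_init; split.
  exists E; split; [split; [|split]|].
  + case: (init_nonempty S) => y0 Hy0.
    exists (I y0); split; first exact: EI.
    move=> x0 Hx0.
    have Hi : init (sync S G) (y0, x0) by split.
    case: (Fi _ Hi) => z0 [Hz0 Hp]; exists z0; split => //.
  + move=> W s [y HW] Hs.
    case: (classic (exists y', trans S y s y')) => [[y' Hy']|Hno].
      exists (V y'); split; [exact: EV | exact: (HV y y' s (EV y') Hy' W HW)].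
    exists W; split; first by exists y.
    move=> x z x' Wxz Hxx'.
    case: (HW _ _ Wxz) => /= Hr _.
    have := Hadm (y, x) s Hr Hs (ex_intro _ x' Hxx').
    by move=> [[y'' x''] [/= H1 _]]; exfalso; apply: Hno; exists y''.
  + move=> W x z s z' [y HW] Wxz _ Hzz'.
    case: (HW _ _ Wxz) => /= Hr Hp.
    case: (Bs _ _ _ _ Hp Hzz') => [[y' x'] [[/= Hy Hx] Hp']].
    exists x', (V y'); split => //; split; first exact: EV.
    split; last exact: (HV y y' s (EV y') Hy W HW).
    split => //=.
    by apply: reach_step Hr _; split; eauto.
  + move=> z; split.
      by move=> [x [W [[_ [_ HW]] Wxz]]]; case: (HW _ _ Wxz).
    move=> Hz.
    case: (Bi _ Hz) => [[y0 x0] [[/= Hy0 Hx0] Hp]].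
    exists x0, (I y0); split; last by [].
    split; first exact: EI.
    split.
      move=> x Hx.
      have Hi : init (sync S G) (y0, x) by split.
      case: (Fi _ Hi) => z1 [Hz1 Hp1]; exists z1; split => //.
    by move=> x z1 [_ [? [? _]]].
- move=> [E [[_ [Ha Hb]] Hg]].
  pose Y := (X * Z -> Prop)%type.
  pose tr := fun (W : Y) (s : Sigma) (W' : Y) => E W /\ E W' /\ matchGR G R W s W'.
  pose ini := fun W : Y => E0 G R E W.
  have Hne : exists W, ini W.
    case: (init_nonempty R) => z Hz.
    case: ((Hg z).2 Hz) => x [W [HW _]]; by exists W.
  pose S := @Automaton Y Sigma tr ini Hne.
  have Hreach : forall p, reachable (sync S G) p -> E p.1.
    move=> p; elim => [q [Hq _]|q s q' _ _ [[_ [Hq' _]] _]] //.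
    by case: Hq.
  exists Y, S; split.
  + move=> [W x] s Hr Hs [x' Hx'].
    have EW := Hreach _ Hr.
    case: (Ha W s EW Hs) => W' [EW' Hm].
    by exists (W', x'); split => //=.
  + exists (fun (p : Y * X) z => E p.1 /\ p.1 (p.2, z)).
    split; split.
    * move=> [W x] [/= HW Hx].
      case: HW => [EW [Hin _]].
      case: (Hin _ Hx) => z [Hz Wxz]; exists z; split => //.
    * move=> [W x] z s [W' x'] /= [EW Wxz] [/= [_ [EW' Hm]] Hxx'].
      case: (Hm _ _ _ Wxz Hxx') => z' [Hz' W'z']; exists z'; split => //.
    * move=> z Hz.
      case: ((Hg z).2 Hz) => x [W [HW Wxz]].
      have [Hx _] := HW.2.2 _ _ Wxz.
      exists (W, x); split; first by split.
      by split => //; case: HW.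
    * move=> z [W x] s z' /= [EW Wxz] Hzz'.
      case: (Hb W x z s z' EW Wxz isT Hzz') => x' [W' [Hx' [EW' [W'z' Hm]]]].
      exists (W', x'); split => //; split => //=.
Qed.
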